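(* Let $\xi=(\tau_L,\delta_L,\tau_R,\delta_R)\in\mathbb{R}^4$, let $P\in\mathbb{R}^2$ and $v\in\mathbb{R}^2$, and let $\alpha$ be the line segment from $P$ to $Q=P+v$, with length $|\alpha|=\|v\|$. Let $s$ be the length of the longest line segment contained in $f_\xi(\alpha)$ and let $c_L,c_R>0$. If $\|A_Lv\|\ge c_L\|v\|$ and $\|A_Rv\|\ge c_R\|v\|$, then $s\ge\frac{c_Lc_R}{c_L+c_R}\,|\alpha|$.
   Context: For $\xi=(\tau_L,\delta_L,\tau_R,\delta_R)\in\mathbb{R}^4$ define $f_\xi:\mathbb{R}^2\to\mathbb{R}^2$ by $f_\xi(x,y)=(\tau_L x+y+1,\,-\delta_L x)$ if $x\le 0$ and $f_\xi(x,y)=(\tau_R x+y+1,\,-\delta_R x)$ if $x\ge 0$, and let $A_L=\begin{bmatrix}\tau_L&1\\-\delta_L&0\end{bmatrix}$, $A_R=\begin{bmatrix}\tau_R&1\\-\delta_R&0\end{bmatrix}$. $\|\cdot\|$ is the Euclidean norm; the length of a line segment is the distance between its endpoints. *)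

(* Defs.v *)
From Stdlib Require Import Reals Lra.
Open Scope R_scope.

Definition pt := (R * R)%type.

Definition f_xi (tauL deltaL tauR deltaR : R) (p : pt) : pt :=
  let (x, y) := p in
  if Rle_dec x 0 then (tauL * x + y + 1, - deltaL * x)
  else (tauR * x + y + 1, - deltaR * x).

(* The companion matrix [[tau, 1], [-delta, 0]] applied to a vector. *)
Definition Amul (tau delta : R) (v : pt) : pt :=
  (tau * fst v + snd v, - delta * fst v).

Definition norm2 (v : pt) : R := sqrt (fst v ^ 2 + snd v ^ 2).

Definition padd (p q : pt) : pt := (fst p + fst q, snd p + snd q).
Definition psub (p q : pt) : pt := (fst p - fst q, snd p - snd q).
Definition pscale (t : R) (p : pt) : pt := (t * fst p, t * snd p).

Definition segment (A B : pt) : pt -> Prop :=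
  fun z => exists t, 0 <= t <= 1 /\ z = padd A (pscale t (psub B A)).

Definition image (f : pt -> pt) (S : pt -> Prop) : pt -> Prop :=
  fun z => exists w, S w /\ z = f w.

Definition seg_lengths (S : pt -> Prop) : R -> Prop :=
  fun l => exists A B, (forall z, segment A B z -> S z) /\ l = norm2 (psub B A).

(* Main.v *)
Require Import Defs.
From Stdlib Require Import Reals Lra Psatz.
Open Scope R_scope.

Lemma conv_le (p1 v1 a b t : R) : a <= t <= b -> p1 + a * v1 <= 0 -> p1 + b * v1 <= 0 ->
  p1 + t * v1 <= 0.
Proof. intros Ht Ha Hb. destruct (Rle_dec 0 v1); nra. Qed.

Lemma conv_ge (p1 v1 a b t : R) : a <= t <= b -> p1 + a * v1 >= 0 -> p1 + b * v1 >= 0 ->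
  p1 + t * v1 >= 0.
Proof. intros Ht Ha Hb. destruct (Rle_dec 0 v1); nra. Qed.

Lemma fL tL dL tR dR x y : x <= 0 -> f_xi tL dL tR dR (x, y) = (tL * x + y + 1, - dL * x).
Proof. intros H. unfold f_xi. destruct (Rle_dec x 0); [reflexivity | lra]. Qed.

Lemma fR tL dL tR dR x y : x >= 0 -> f_xi tL dL tR dR (x, y) = (tR * x + y + 1, - dR * x).
Proof. intros H. unfold f_xi. destruct (Rle_dec x 0); [|reflexivity].
  assert (x = 0) by lra. subst. f_equal; ring. Qed.

Lemma seg_gen (f : pt -> pt) (tau delta p1 p2 v1 v2 a b : R) :
  0 <= a -> a <= b -> b <= 1 ->
  (forall t, a <= t <= b -> f (p1 + t * v1, p2 + t * v2) =
     (tau * (p1 + t * v1) + (p2 + t * v2) + 1, - delta * (p1 + t * v1))) ->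
  seg_lengths (image f (segment (p1, p2) (padd (p1, p2) (v1, v2))))
    ((b - a) * norm2 (Amul tau delta (v1, v2))).
Proof.
  intros H0 Hab H1 Hf.
  exists (f (p1 + a * v1, p2 + a * v2)), (f (p1 + b * v1, p2 + b * v2)). split.
  - intros z [u [Hu ->]].
    exists (p1 + (a + u * (b - a)) * v1, p2 + (a + u * (b - a)) * v2). split.
    + exists (a + u * (b - a)). split; [nra|].
      unfold padd, pscale, psub; simpl. f_equal; ring.
    + rewrite !Hf; try nra. unfold padd, pscale, psub; simpl. f_equal; ring.
  - rewrite !Hf; try lra. unfold norm2, psub, Amul; cbv [fst snd].
    idtac.
    replace ((tau * (p1 + b * v1) + (p2 + b * v2) + 1 - (tau * (p1 + a * v1) + (p2 + a * v2) + 1)) ^ 2 +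
             (- delta * (p1 + b * v1) - - delta * (p1 + a * v1)) ^ 2)
      with ((b - a) ^ 2 * ((tau * v1 + v2) ^ 2 + (- delta * v1) ^ 2)) by ring.
    rewrite sqrt_mult_alt by nra. rewrite sqrt_pow2 by lra. reflexivity.
Qed.

Theorem lemma5p1 (tauL deltaL tauR deltaR : R) (P v : pt) (cL cR s : R) :
  0 < cL -> 0 < cR ->
  norm2 (Amul tauL deltaL v) >= cL * norm2 v ->
  norm2 (Amul tauR deltaR v) >= cR * norm2 v ->
  is_lub (seg_lengths (image (f_xi tauL deltaL tauR deltaR)
                             (segment P (padd P v)))) s ->
  s >= cL * cR / (cL + cR) * norm2 v.
Proof.
  intros HcL HcR HL HR [Hub _].
  destruct P as [p1 p2], v as [v1 v2].
  set (NL := norm2 (Amul tauL deltaL (v1, v2))) in *.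
  set (NR := norm2 (Amul tauR deltaR (v1, v2))) in *.
  set (N := norm2 (v1, v2)) in *.
  assert (HN : 0 <= N) by apply sqrt_pos.
  assert (Lside : forall a b, 0 <= a -> a <= b -> b <= 1 -> p1 + a * v1 <= 0 -> p1 + b * v1 <= 0 ->
            (b - a) * NL <= s).
  { intros a b Ha Hab Hb Hxa Hxb. apply Hub. apply seg_gen; auto.
    intros t Ht. apply fL. apply (conv_le p1 v1 a b t); auto. }
  assert (Rside : forall a b, 0 <= a -> a <= b -> b <= 1 -> p1 + a * v1 >= 0 -> p1 + b * v1 >= 0 ->
            (b - a) * NR <= s).
  { intros a b Ha Hab Hb Hxa Hxb. apply Hub. apply seg_gen; auto.
    intros t Ht. apply fR. apply (conv_ge p1 v1 a b t); auto. }
  assert (Key : exists t, 0 <= t <= 1 /\ t * NL <= s /\ (1 - t) * NR <= s).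
  { destruct (Rle_dec p1 0) as [Hp|Hp]; destruct (Rle_dec (p1 + v1) 0) as [Hq|Hq].
    - exists 1. split; [lra|]. split.
      + replace (1 * NL) with ((1 - 0) * NL) by ring. apply Lside; lra.
      + replace ((1 - 1) * NR) with ((0 - 0) * NL) by ring. apply Lside; lra.
    - set (t0 := - p1 / v1).
      assert (Hv : v1 > 0) by lra.
      assert (Ht0 : p1 + t0 * v1 = 0) by (unfold t0; field; lra).
      assert (0 <= t0 <= 1).
      { split; unfold t0.
        - apply Rmult_le_pos; [lra|]. left; apply Rinv_0_lt_compat; lra.
        - apply (Rmult_le_reg_r v1); [lra|]. unfold Rdiv. rewrite Rmult_assoc, Rinv_l; lra. }
      exists t0. split; [lra|]. split.
      + replace (t0 * NL) with ((t0 - 0) * NL) by ring. apply Lside; lra.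
      + apply Rside; lra.
    - set (t0 := - p1 / v1).
      assert (Hv : v1 < 0) by lra.
      assert (Ht0 : p1 + t0 * v1 = 0) by (unfold t0; field; lra).
      assert (0 <= t0 <= 1).
      { split; unfold t0.
        - replace (- p1 / v1) with (p1 / - v1) by (field; lra).
          apply Rmult_le_pos; [lra|]. left; apply Rinv_0_lt_compat; lra.
        - replace (- p1 / v1) with (p1 / - v1) by (field; lra).
          apply (Rmult_le_reg_r (- v1)); [lra|]. unfold Rdiv. rewrite Rmult_assoc, Rinv_l; lra. }
      exists (1 - t0). split; [lra|]. split.
      + replace ((1 - t0) * NL) with ((1 - t0) * NL) by ring. apply Lside; lra.
      + replace ((1 - (1 - t0)) * NR) with ((t0 - 0) * NR) by ring. apply Rside; lra.
    - exists 0. split; [lra|]. split.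
      + replace (0 * NL) with ((0 - 0) * NR) by ring. apply Rside; lra.
      + replace ((1 - 0) * NR) with ((1 - 0) * NR) by ring. apply Rside; lra. }
  destruct Key as [t [Ht [H1 H2]]].
  assert (A1 : cR * t * (cL * N) <= cR * t * NL) by (apply Rmult_le_compat_l; nra).
  assert (A2 : cL * (1 - t) * (cR * N) <= cL * (1 - t) * NR) by (apply Rmult_le_compat_l; nra).
  assert (A3 : cR * (t * NL) <= cR * s) by (apply Rmult_le_compat_l; lra).
  assert (A4 : cL * ((1 - t) * NR) <= cL * s) by (apply Rmult_le_compat_l; lra).
  assert (Hs : cL * cR * N <= (cL + cR) * s) by nra.
  apply Rle_ge. unfold Rdiv.
  apply (Rmult_le_reg_l (cL + cR)); [lra|].
  replace ((cL + cR) * (cL * cR * / (cL + cR) * N)) with (cL * cR * N) by (field; lra).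
  exact Hs.
Qed.
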